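(* Let $(X_n)_{n\ge0}$ be a homogeneous Markov chain on $\mathbb{R}^d$ satisfying assumptions $(\mathcal{A}_1)$ and $(\mathcal{A}_2)$ below. Then for any $0<\epsilon<\epsilon_0$ and any integer $k\ge1$, $$\sup_{x\in\mathbb{M}}\mathbb{P}_\mu\Big(\min_{1\le i\le k}\|X_i-x\|>\epsilon\Big)\le(1-\kappa\epsilon^bV_d)^k.$$
   Context: $(\mathcal{A}_1)$: the chain has an invariant probability measure $\mu$ with compact support $\mathbb{M}$. $(\mathcal{A}_2)$: the transition kernel $K(x,\cdot)=\mathbb{P}(X_1\in\cdot\mid X_0=x)$, $x\in\mathbb{M}$, satisfies $K(x,dy)=k(x,y)\nu(dy)$ for a positive measure $\nu$ on $\mathbb{M}$ and a positive function $k$; for some $b>0$ and $\epsilon_0>0$, $V_d:=\inf_{x\in\mathbb{M}}\inf_{0<\epsilon<\epsilon_0}\epsilon^{-b}\nu(B(x,\epsilon)\cap\mathbb{M})>0$; and there is $\kappa>0$ with $\inf_{x,y\in\mathbb{M}}k(x,y)\ge\kappa$. $B(x,\epsilon)$ is the closed Euclidean ball. $\mathbb{P}_\mu$ denotes probability when $X_0$ has distribution $\mu$. *)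

(* Defs.v *)
(* State space R^d is modelled as d.-tuple R,
   equipped with the library's product (= Borel) sigma-algebra. *)
From mathcomp Require Import all_boot all_algebra.
From mathcomp Require Import all_classical all_reals all_analysis.
Set Implicit Arguments. Unset Strict Implicit. Unset Printing Implicit Defensive.
Import GRing.Theory Num.Theory.
Local Open Scope classical_set_scope.
Local Open Scope ring_scope.

Section Defs.
Variables (R : realType) (d : nat).
Local Notation E := (d.-tuple R).

Definition euclid_dist (x y : E) : R :=
  Num.sqrt (\sum_(i < d) (tnth x i - tnth y i) ^+ 2).

Definition euclid_ball (x : E) (eps : R) : set E := [set y | euclid_dist x y <= eps].

Definition euclid_open (U : set E) : Prop :=
  forall x, U x -> exists e : R, 0 < e /\ [set y | euclid_dist x y < e] `<=` U.

Definition euclid_compact (M : set E) : Prop :=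
  forall (I : Type) (U : I -> set E), (forall i, euclid_open (U i)) ->
    M `<=` \bigcup_i U i ->
    exists F : set I, finite_set F /\ M `<=` \bigcup_(i in F) U i.

Definition msupport (mu : {measure set E -> \bar R}) : set E :=
  [set x | forall e : R, 0 < e -> (0 < mu (euclid_ball x e))%E].

Definition kernel_invariant (mu : {measure set E -> \bar R}) (K : R.-pker E ~> E) : Prop :=
  forall A : set E, measurable A -> (\int[mu]_x K x A)%E = mu A.

Fixpoint mc_iter (K : R.-pker E ~> E) (As : seq (set E)) (x : E) : \bar R :=
  match As with
  | [::] => 1%E
  | A :: As' => (\int[K x]_(y in A) mc_iter K As' y)%E
  end.

(* X is a homogeneous Markov chain on (Omega, P) with initial law mu and
   transition kernel K: characterised by its finite-dimensional distributions
   P(X_0 in A_0, X_1 in A_1, ..., X_n in A_n)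
     = int_{A_0} mu(dx0) int_{A_1} K(x0,dx1) ... int_{A_n} K(x_{n-1},dxn) 1. *)
Definition markov_chain {d0 : measure_display} {Omega : measurableType d0}
  (P : probability Omega R) (X : nat -> Omega -> E)
  (mu : probability E R) (K : R.-pker E ~> E) : Prop :=
  (forall n, measurable_fun setT (X n)) /\
  forall (A0 : set E) (As : seq (set E)),
    measurable A0 -> (forall A, A \in As -> measurable A) ->
    P [set w | A0 (X 0%N w) /\
               forall i, (i < size As)%N -> nth setT As i (X i.+1 w)]
    = (\int[mu]_(x in A0) mc_iter K As x)%E.

Definition Vd (nu : {measure set E -> \bar R}) (M : set E) (b eps0 : R) : \bar R :=
  ereal_inf [set v | exists x (eps : R), M x /\ (0 < eps < eps0)%R /\
     v = ((eps `^ (- b))%:E * nu (euclid_ball x eps `&` M))%E].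

End Defs.

(* Main.v *)
Require Import Defs.
From mathcomp Require Import all_boot all_order all_algebra.
From mathcomp Require Import all_classical all_reals all_analysis.
From mathcomp Require Import measurable_realfun.
From mathcomp Require Import ring lra.
Import Order.TTheory GRing.Theory Num.Theory.
Set Implicit Arguments. Unset Strict Implicit. Unset Printing Implicit Defensive.
Local Open Scope classical_set_scope.
Local Open Scope ring_scope.

Section Helpers.
Variables (R : realType) (d : nat).
Local Notation E := (d.-tuple R).

Lemma dist_sym (x y : E) : euclid_dist x y = euclid_dist y x.
Proof.
rewrite /euclid_dist; congr Num.sqrt; apply: eq_bigr => i _.
by rewrite -sqrrN opprB.
Qed.

Lemma dist_coord (x y : E) i : `|tnth x i - tnth y i| <= euclid_dist x y.
Proof.
rewrite /euclid_dist -sqrtr_sqr ler_sqrt; last first.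
  by apply: sumr_ge0 => j _; exact: sqr_ge0.
rewrite (bigD1 i) //= lerDl; apply: sumr_ge0 => j _; exact: sqr_ge0.
Qed.

Lemma ball_sqE (x : E) (e : R) : 0 <= e ->
  euclid_ball x e = [set y | \sum_(i < d) (tnth x i - tnth y i) ^+ 2 <= e ^+ 2].
Proof.
move=> e0; apply/seteqP; split => y /=; rewrite /euclid_ball /euclid_dist /=.
  move=> h; rewrite -[X in _ <= X](ger0_norm e0) -sqrtr_sqr ler_sqrt // in h.
  exact: sqr_ge0.
move=> h; rewrite -[X in _ <= X](ger0_norm e0) -sqrtr_sqr ler_sqrt //; exact: sqr_ge0.
Qed.

Lemma measurable_ball (x : E) (e : R) : 0 <= e -> measurable (euclid_ball x e).
Proof.
move=> e0; rewrite ball_sqE //.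
have mg : measurable_fun setT (fun y : E => \sum_(i < d) (tnth x i - tnth y i) ^+ 2).
  apply: measurable_sum => i; apply: measurable_funX.
  apply: measurable_funB => //; exact: measurable_tnth.
have := mg measurableT [set` `]-oo, e ^+ 2]] (measurable_itv _).
rewrite setTI; congr measurable; apply/seteqP; split => y /=; rewrite in_itv /= //.
Qed.


Definition box (q : d.-tuple rat) (m : nat) : set E :=
  [set y | forall i, `|tnth y i - ratr (tnth q i)| < m.+1%:R^-1].

Lemma measurable_box q m : measurable (box q m).
Proof.
set r : R := m.+1%:R^-1.
have -> : box q m = \bigcap_(i in [set: 'I_d])
   ((fun y : E => tnth y i) @^-1` [set` `](ratr (tnth q i) - r), (ratr (tnth q i) + r)[]).
  apply/seteqP; split => y /=.
    move=> h i _ /=; have := h i; rewrite in_itv /= distrC ltr_distlC //.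
  move=> h i; have /= := h i I; rewrite in_itv /= distrC ltr_distlC //.
apply: fin_bigcap_measurable; first exact: finite_finset.
move=> i _; have := measurable_tnth i measurableT (measurable_itv
  `](ratr (tnth q i) - r), (ratr (tnth q i) + r)[).
by rewrite setTI.
Qed.

Lemma box_open (y : E) q m : box q m y ->
  exists e : R, 0 < e /\ euclid_ball y e `<=` box q m.
Proof.
move=> hy; set r : R := m.+1%:R^-1.
pose F i := (r - `|tnth y i - ratr (tnth q i)|) / 2.
exists (\big[Num.min/1]_(i < d) F i); split.
  apply: (big_ind (fun v => 0 < v)) => //.
    by move=> a b a0 b0; rewrite lt_min a0 b0.
  move=> i _; rewrite /F divr_gt0 // subr_gt0; exact: hy.
move=> z hz i.
have h1 : \big[Num.min/1]_(i < d) F i <= F i by exact: bigmin_le.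
have h2 := dist_coord y z i.
rewrite /euclid_ball /= in hz.
have h3 := hy i; rewrite -/r in h3.
have h4 : - `|tnth y i - ratr (tnth q i)| <= tnth y i - ratr (tnth q i) <= `|tnth y i - ratr (tnth q i)| by rewrite -ler_norml.
rewrite /F in h1.
rewrite ler_norml in h2.
move: h1 h2 h3 h4 hz.
move: (\big[Num.min/1]_(i < d) F i) (euclid_dist y z) (`|tnth y i - ratr (tnth q i)|) => e D t.
move=> h1 /andP[a1 a2] h3 /andP[b1 b2] hz.
rewrite ltr_norml -/r; apply/andP; split; lra.
Qed.

Lemma box_approx (x : E) (e : R) : 0 < e ->
  exists q m, box q m x /\ box q m `<=` [set y | euclid_dist x y < e].
Proof.
move=> e0.
pose m := Num.truncn (2 * (d%:R + 1) / e).
pose r : R := m.+1%:R^-1.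
have r0 : 0 < r by rewrite /r invr_gt0.
have hr : 2 * (d%:R + 1) * r < e.
  have := truncnS_gt (2 * (d%:R + 1) / e); rewrite -/m => h.
  rewrite ltr_pdivrMr // in h.
  by rewrite /r ltr_pdivrMr ?ltr0Sn // [e * _]mulrC.
have hq i : exists q : rat, ratr q \in `](tnth x i - r), (tnth x i + r)[.
  by apply: rat_in_itvoo; lra.
pose q := [tuple projT1 (cid (hq i)) | i < d].
have hx : box q m x.
  move=> i; rewrite tnth_mktuple; case: cid => /= qi; rewrite in_itv /=.
  by rewrite ltr_distlC.
exists q, m; split => // y hy /=.
have hc i : (tnth x i - tnth y i) ^+ 2 <= (2 * r) ^+ 2.
  have := hy i; have := hx i; rewrite -/r !ltr_norml => /andP[a1 a2] /andP[b1 b2].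
  nra.
have hs : \sum_(i < d) (tnth x i - tnth y i) ^+ 2 <= d%:R * (2 * r) ^+ 2.
  apply: le_trans (ler_sum _ (fun i _ => hc i)) _.
  by rewrite big_const_ord iter_addr_0 [leRHS]mulrC mulr_natr.
rewrite /euclid_dist -[e](ger0_norm (ltW e0)) -sqrtr_sqr ltr_sqrt; last first.
  by rewrite exprn_gt0.
apply: le_lt_trans hs _.
have D0 : 0 <= d%:R :> R by [].
have h1 : (2 * (d%:R + 1) * r) ^+ 2 < e ^+ 2.
  have u0 : 0 <= 2 * (d%:R + 1) * r by apply: mulr_ge0; [lra|exact: ltW].
  nra.
apply: le_lt_trans h1.
have : 0 <= (2 * r) ^+ 2 * (d%:R ^+ 2 + d%:R + 1) by apply: mulr_ge0; [exact: sqr_ge0|nra].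
set D := d%:R; set t := 2 * r.
have -> : 2 * (D + 1) * r = t * (D + 1) by rewrite /t; ring.
nra.
Qed.

End Helpers.
Arguments box {R d} q m.
Arguments measurable_box {R d} q m.

Section Supp.
Variables (R : realType) (d : nat) (mu : {measure set (d.-tuple R) -> \bar R}).
Local Notation E := (d.-tuple R).

Definition Gn (n : nat) : set E :=
  match (unpickle n : option (d.-tuple rat * nat)) with
  | Some (q, m) => if pselect (mu (box q m) = 0%E) then box q m else set0
  | None => set0
  end.

Lemma Gn_meas n : measurable (Gn n).
Proof.
rewrite /Gn; case: (unpickle n) => [[q m]|] //.
case: pselect => ? /=; [exact: measurable_box|exact: measurable0].
Qed.

Lemma Gn_null n : mu (Gn n) = 0%E.
Proof.
rewrite /Gn; case: (unpickle n) => [[q m]|] //=.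
case: pselect => h /=; first exact: h. exact: (measure0 mu).
Qed.
Lemma suppC_eq : ~` msupport mu = \bigcup_n Gn n.
Proof.
apply/seteqP; split => x /=.
  move=> /existsNP[e /not_implyP[e0 /negP]]; rewrite -leNgt => mu0.
  have mu0' : mu (euclid_ball x e) = 0%E by apply/le_anti; rewrite mu0 measure_ge0.
  have [q [m [hx hsub]]] := box_approx x e0.
  have mb : mu (box q m) = 0%E.
    apply: (subset_measure0 (measurable_box q m) (measurable_ball x (ltW e0))) => //.
    by move=> y /hsub /ltW.
  exists (pickle (q, m)) => //; rewrite /Gn pickleK.
  by case: pselect => ? /=.
move=> [n _]; rewrite /Gn; case: (unpickle n) => [[q m]|] //.
case: pselect => /= // mb hy hs.
have [e [e0 hsub]] := box_open hy.
have := hs e e0.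
have : (mu (euclid_ball x e) <= mu (box q m))%E.
  by apply: le_measure => //; rewrite inE; [exact: measurable_ball (ltW e0)|exact: measurable_box].
by rewrite mb => h1 h2; have := lt_le_trans h2 h1; rewrite ltxx.
Qed.

Lemma msupport_meas : measurable (msupport mu).
Proof.
rewrite -[msupport mu]setCK suppC_eq; apply: measurableC.
by apply: bigcupT_measurable => n; exact: Gn_meas.
Qed.

Lemma msuppC0 : mu (~` msupport mu) = 0%E.
Proof.
have [N [mN N0 sub]] : mu.-negligible (\bigcup_n Gn n).
  apply: negligible_bigcup => n; exists (Gn n); split => //; [exact: Gn_meas|exact: Gn_null].
rewrite suppC_eq; apply: (subset_measure0 _ mN sub N0).
by apply: bigcupT_measurable => n; exact: Gn_meas.
Qed.

End Supp.

Section Gen.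
Local Open Scope ereal_scope.
Variables (R : realType) (d0 : measure_display) (T : measurableType d0).

Lemma int_bound (m : {measure set T -> \bar R}) (D S : set T) (f : T -> \bar R) (C : R) :
  measurable D -> measurable S -> m (D `&` ~` S) = 0 ->
  measurable_fun setT f -> (forall x, 0 <= f x) -> (0 <= C)%R ->
  (forall x, D x -> S x -> f x <= C%:E) ->
  \int[m]_(x in D) f x <= C%:E * m (D `&` S).
Proof.
move=> mD mS m0 mf f0 C0 fC.
have eD : D = (D `&` S) `|` (D `&` ~` S) by rewrite -setIUr setUv setIT.
have mDS : measurable (D `&` S) by exact: measurableI.
have mDS' : measurable (D `&` ~` S) by apply: measurableI => //; exact: measurableC.
have -> : \int[m]_(x in D) f x =
    \int[m]_(x in D `&` S) f x + \int[m]_(x in D `&` ~` S) f x.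
  rewrite -ge0_integral_setU //; first by rewrite -eD.
  all: try exact: measurable_funTS.
  all: try by move=> x _; exact: f0.
  by rewrite disj_set2E; apply/eqP; rewrite setIACA setICr setI0.
rewrite (null_set_integral _ _ m0) //; last exact: measurable_funTS.
rewrite adde0 -integral_cst //.
apply: ge0_le_integral => //.
- exact: measurable_funTS.
- by move=> x [Dx Sx]; exact: fC.
Qed.

Lemma compl_bound (m : {measure set T -> \bar R}) (B : set T) (c : R) :
  measurable B -> m setT = 1 -> c%:E <= m B -> m (~` B) <= (1 - c)%:E.
Proof.
move=> mB m1 cB.
have h : m (~` B) + m B = 1.
  rewrite -measureU //; [by rewrite setvU | exact: measurableC | by rewrite setICl].
have fA : m (~` B) \is a fin_num.
  rewrite ge0_fin_numE //; apply: (le_lt_trans (y := 1)); last exact: ltey.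
  by rewrite -h leeDl.
have fB : m B \is a fin_num.
  rewrite ge0_fin_numE //; apply: (le_lt_trans (y := 1)); last exact: ltey.
  by rewrite -h leeDr.
move: h cB; rewrite -(fineK fA) -(fineK fB) -EFinD !lee_fin => -[h] cB.
lra.
Qed.

End Gen.

Theorem lemma7p2 (R : realType) (d : nat)
  (d0 : measure_display) (Omega : measurableType d0) (P : probability Omega R)
  (X : nat -> Omega -> d.-tuple R)
  (mu : probability (d.-tuple R) R) (K : R.-pker (d.-tuple R) ~> (d.-tuple R))
  (nu : {measure set (d.-tuple R) -> \bar R})
  (kd : d.-tuple R -> d.-tuple R -> R) (b eps0 kappa : R) :
  (* X is a homogeneous Markov chain with kernel K, started from mu (P = P_mu) *)
  markov_chain P X mu K ->
  (* (A1): mu invariant for K, with compact support M *)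
  kernel_invariant mu K ->
  euclid_compact (msupport mu) ->
  (* (A2): K(x,dy) = k(x,y) nu(dy) for x in M, nu a positive measure on M *)
  nu (~` msupport mu) = 0%E ->
  (forall x, msupport mu x -> measurable_fun setT (kd x)) ->
  (forall x y, msupport mu x -> msupport mu y -> 0 < kd x y) ->
  (forall x, msupport mu x -> forall A, measurable A ->
     K x A = (\int[nu]_(y in A) (kd x y)%:E)%E) ->
  0 < b -> 0 < eps0 ->
  (0 < Vd nu (msupport mu) b eps0)%E ->
  0 < kappa ->
  (forall x y, msupport mu x -> msupport mu y -> kappa <= kd x y) ->
  forall (eps : R) (k : nat), 0 < eps < eps0 -> (1 <= k)%N ->
    (ereal_sup [set P [set w | forall i, (1 <= i <= k)%N -> (eps < euclid_dist (X i w) x)%R]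
                | x in msupport mu]
     <= ((1 - kappa * eps `^ b *
           fine (Vd nu (msupport mu) b eps0))
         ^+ k)%:E)%E.
Proof.
move=> [mX HX] _ _ nuC0 mkd kpos Kdef b0 e00 V0 k0 kk eps k /andP[he0 he1] k1.
set M := msupport mu.
have mM : measurable M := msupport_meas mu.
have muC : mu (~` M) = 0%E := msuppC0 mu.
set V := Vd nu M b eps0.
set c := kappa * eps `^ b * fine V.
apply: ge_ereal_sup => _ [x Mx <-].
set B := euclid_ball x eps.
have mB : measurable B := measurable_ball x (ltW he0).
set A := ~` B.
have mA : measurable A := measurableC mB.
have mBM : measurable (B `&` M) := measurableI _ _ mB mM.
have key : forall y, M y -> (c%:E <= K y B)%E.
  move=> y My.
  have KBM : (K y (B `&` M) <= K y B)%E.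
    by apply: le_measure => //; rewrite inE.
  have lowb : (kappa%:E * nu (B `&` M) <= K y (B `&` M))%E.
    rewrite Kdef // -integral_cst //.
    apply: ge0_le_integral => //.
    - by move=> z _; rewrite lee_fin ltW.
    - apply/measurable_EFinP; exact: measurable_funTS (mkd y My).
    - by move=> z [_ Mz]; rewrite lee_fin; exact: kk.
  apply: le_trans KBM; apply: le_trans lowb.
  have hVle : (V <= (eps `^ (- b))%:E * nu (B `&` M))%E.
    apply: ereal_inf_lbound; exists x, eps; split => //; split => //.
    by rewrite he0 he1.
  rewrite /c; case hV : V => [r| |]; rewrite hV in hVle V0 => /=.
  - rewrite -mulrA EFinM; apply: lee_wpmul2l; first by rewrite lee_fin ltW.
    have ep : (0 < eps `^ b) := powR_gt0 b he0.
    have -> : nu (B `&` M) = ((eps `^ b)%:E * ((eps `^ (- b))%:E * nu (B `&` M)))%E.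
      by rewrite muleA -EFinM powRN mulfV ?gt_eqF // mul1e.
    rewrite EFinM; apply: lee_wpmul2l; [by rewrite lee_fin; exact: ltW | exact: hVle].
  - by rewrite mulr0; apply: mule_ge0 => //; rewrite lee_fin; exact: ltW.
  - by rewrite mulr0; apply: mule_ge0 => //; rewrite lee_fin; exact: ltW.
have KB1 : (K x B <= 1)%E.
  by rewrite -(prob_kernel (s:=K) x); apply: le_measure => //; rewrite inE.
have c1 : c <= 1.
  by have := le_trans (key x Mx) KB1; rewrite lee_fin.
pose f n := mc_iter K (nseq n A).
have fS n y : f n.+1 y = (\int[K y]_(z in A) f n z)%E by [].
have fmeas : forall n, measurable_fun setT (f n) /\ forall y, (0 <= f n y)%E.
  elim => [|n [IHm IH0]].
    by split => //; exact: measurable_cst.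
  split; last by move=> y; rewrite fS; apply: integral_ge0 => z _; exact: IH0.
  have -> : f n.+1 = (fun y => \int[K y]_z ((f n) \_ A) z)%E.
    by apply: funext => y; rewrite fS integral_mkcond.
  apply: measurable_fun_integral_kernel.
  - move=> U mU; exact: measurable_kernel.
  - by move=> z; apply: erestrict_ge0 => t _; exact: IH0.
  - by apply: (measurable_restrictT _ mA).1; exact: measurable_funTS.
have fbound : forall n y, M y -> (f n y <= ((1 - c) ^+ n)%:E)%E.
  elim => [|n IH] y My; first by rewrite expr0.
  have KC0 : K y (A `&` ~` M) = 0%E.
    have KM : K y (~` M) = 0%E.
      rewrite Kdef //; last exact: measurableC.
      apply: null_set_integral => //; first exact: measurableC.
      apply/measurable_EFinP; exact: measurable_funTS (mkd y My).
    apply: (subset_measure0 _ _ _ KM); [apply: measurableI => //; exact: measurableC | exact: measurableC | by move=> z []].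
  have cn : 0 <= (1 - c) ^+ n by apply: exprn_ge0; lra.
  rewrite fS.
  apply: le_trans (int_bound mA mM KC0 (fmeas n).1 (fmeas n).2 cn
    (fun z _ Mz => IH z Mz)) _.
  rewrite exprSr EFinM; apply: lee_wpmul2l; first by rewrite lee_fin.
  apply: le_trans (compl_bound mB (prob_kernel (s:=K) y) (key y My)).
  by apply: le_measure => //; rewrite inE //; exact: measurableI.
have evE : [set w | forall i, (1 <= i <= k)%N -> eps < euclid_dist (X i w) x] =
  [set w | setT (X 0%N w) /\ forall i, (i < size (nseq k A))%N ->
       nth setT (nseq k A) i (X i.+1 w)].
  apply/seteqP; split => w /=.
    move=> h; split => // i; rewrite size_nseq => ik; rewrite nth_nseq ik.
    rewrite /A /B /euclid_ball /=; apply/negP; rewrite -ltNge dist_sym.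
    by apply: h; rewrite ltnS ik.
  move=> [_ h] [//|i] /andP[_ ik].
  have := h i; rewrite size_nseq nth_nseq ik => /(_ isT).
  rewrite /A /B /euclid_ball /= => /negP; rewrite -ltNge dist_sym //.
rewrite evE HX //; last by move=> A'; rewrite mem_nseq => /andP[_ /eqP ->].
have m0 : mu (setT `&` ~` M) = 0%E by rewrite setTI.
have ck : 0 <= (1 - c) ^+ k by apply: exprn_ge0; lra.
apply: le_trans (int_bound measurableT mM m0 (fmeas k).1 (fmeas k).2 ck
    (fun z _ Mz => fbound k z Mz)) _.
rewrite -[X in (_ <= X)%E]mule1; apply: lee_wpmul2l; first by rewrite lee_fin.
by apply: probability_le1; exact: measurableI.
Qed.
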